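(* Let $(G,c)$ be a tensor network template. Let $d_{\min}=\min_{e\in E}c_e$, and let $k$ be the minimum cardinality of an edge cut set of $G$. Then $\mathrm{QMF}(G,c)\ge d_{\min}^{\,k}$.
   Context: A tensor network template $(G,c)$ consists of a finite undirected graph $G$ with edge set $E$ whose vertex set is partitioned as $S\sqcup T\sqcup V$. Every element of $S$ (inputs) and every element of $T$ (outputs) is an open end of degree $1$; the elements of $V$ are called vertices. For $u\in S\sqcup T$, $e(u)$ denotes the edge incident to $u$. A capacity function $c:E\to\mathbb{Z}_{>0}$ is given, and to each edge $e$ one associates $\mathbb{C}^{c_e}$ with a fixed basis. At each vertex $v$ of degree $d_v$ an ordering $e(v,1),\dots,e(v,d_v)$ of the incident edge-ends is fixed. A tensor assignment $\mathcal T=(\mathcal T_v)_{v\in V}$ chooses $\mathcal T_v\in\bigotimes_{i=1}^{d_v}\mathbb{C}^{c_{e(v,i)}}$ for each $v$. Let $V_S=\bigotimes_{u\in S}\mathbb{C}^{c_{e(u)}}$ and $V_T=\bigotimes_{u\in T}\mathbb{C}^{c_{e(u)}}$. Contracting the network along all edges gives $\beta(G,c;\mathcal T)\in\mathrm{Hom}(V_S,V_T)$, whose matrix entries are $\langle I_T|\beta|I_S\rangle=\sum_W\prod_{v\in V}(\mathcal T_v)_{W|_v}$. Here $W$ ranges over all assignments of basis indices to all edges that agree with $I_S$ on the input edges and with $I_T$ on the output edges, and $W|_v$ is the tuple of indices on $e(v,1),\dots,e(v,d_v)$. The quantum max-flow is $\mathrm{QMF}(G,c)=\max_{\mathcal T}\operatorname{rank}\beta(G,c;\mathcal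 T)$. An edge cut set is a set $C\subseteq E$ for which there is a partition $S\sqcup T\sqcup V=\bar S\sqcup\bar T$ with $S\subseteq\bar S$, $T\subseteq\bar T$, and $C$ equal to the set of edges having one endpoint in $\bar S$ and the other in $\bar T$. *)

(* Defs.v *)
From HB Require Import structures.
From mathcomp Require Import all_boot all_order all_algebra.
From Stdlib Require Import ClassicalEpsilon.
Set Implicit Arguments. Unset Strict Implicit. Unset Printing Implicit Defensive.
Import Order.TTheory GRing.Theory Num.Theory.

(* A tensor network template is given by:
   - Nd : finType of all nodes (inputs, outputs and vertices), E : finType of edges;
   - ends e : the (unordered) pair of endpoints of the edge e;
   - S (inputs), T (outputs) : {set Nd}; the vertices are V := ~: (S :|: T);
   - c : E -> nat the capacity;
   - ord v : seq E, the ordering e(v,1),...,e(v,d_v) of the edge-ends at a vertex v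
     (a loop at v appears twice);
   - eo u : the edge e(u) incident to an open end u. *)

Section Template.
Variables (Nd E : finType) (ends : E -> Nd * Nd).

Definition nends (e : E) (x : Nd) : nat := ((ends e).1 == x) + ((ends e).2 == x).
Definition degree (x : Nd) : nat := \sum_(e : E) nends e x.
Definition verts (S T : {set Nd}) : {set Nd} := ~: (S :|: T).

Definition is_template (S T : {set Nd}) (c : E -> nat) (ord : Nd -> seq E)
  (eo : Nd -> E) : Prop :=
  [/\ [disjoint S & T],
      (forall e, 0 < c e)%N,
      (forall u, u \in S :|: T -> degree u = 1%N /\ (0 < nends (eo u) u)%N) &
      (forall v, v \in verts S T -> forall e, count_mem e (ord v) = nends e v)].

Definition crossing (Sb : {set Nd}) : {set E} :=
  [set e | ((ends e).1 \in Sb) != ((ends e).2 \in Sb)].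

Definition is_edge_cut (S T : {set Nd}) (C : {set E}) : Prop :=
  exists Sb : {set Nd}, [/\ S \subset Sb, T \subset ~: Sb & C = crossing Sb].

Definition is_min_cut_size (S T : {set Nd}) (k : nat) : Prop :=
  (exists C, is_edge_cut S T C /\ #|C| = k) /\
  (forall C, is_edge_cut S T C -> (k <= #|C|)%N).

Definition is_min_capacity (c : E -> nat) (d : nat) : Prop :=
  (exists e, c e = d) /\ (forall e, (d <= c e)%N).

Variables (c : E -> nat) (ord : Nd -> seq E) (eo : Nd -> E).

(* multi-indices of the tensor at v: one basis index for each edge-end e(v,i) *)
Definition vidx (v : Nd) : finType :=
  {dffun forall i : 'I_(size (ord v)), 'I_(c (tnth (in_tuple (ord v)) i))}.

Definition eidx : finType := {dffun forall e : E, 'I_(c e)}.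

(* basis multi-indices of V_A for A = S or A = T *)
Definition oidx (A : {set Nd}) : finType :=
  {dffun forall u : {x : Nd | x \in A}, 'I_(c (eo (val u)))}.

Definition restr (W : eidx) (v : Nd) : vidx v :=
  [ffun i => W (tnth (in_tuple (ord v)) i)].

Definition agree (A : {set Nd}) (W : eidx) (I : oidx A) : bool :=
  [forall u, W (eo (val u)) == I u].

Variable (C : numClosedFieldType).

(* a tensor assignment: a tensor in ⊗_i C^{c_{e(v,i)}} for each node
   (only the components at vertices v ∈ V are used) *)
Definition assignment := forall v : Nd, {ffun vidx v -> C}.

(* the matrix of beta(G,c;Tv) : V_S -> V_T, rows indexed by I_T, columns by I_S *)
Definition beta (S T : {set Nd}) (Tv : assignment) :
  'M[C]_(#|{: oidx T}|, #|{: oidx S}|) :=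
  \matrix_(i, j)
    (\sum_(W : eidx | agree W (enum_val i : oidx T) && agree W (enum_val j : oidx S))
      (\prod_(v in verts S T) Tv v (restr W v))%R)%R.

(* quantum max-flow: the maximum rank of beta over all tensor assignments
   (ranks are bounded by the number of rows) *)
Definition decide (P : Prop) : bool :=
  if excluded_middle_informative P then true else false.

Definition QMF (S T : {set Nd}) : nat :=
  \max_(r < #|{: oidx T}|.+1 | decide (exists Tv : assignment, \rank (beta S T Tv) = r)) r.

End Template.

(* Main.v *)
Require Import Defs.
From HB Require Import structures.
From mathcomp Require Import all_boot all_order all_algebra.
From mathcomp Require Import zify ring.
From Stdlib Require Import ClassicalEpsilon.
Set Implicit Arguments. Unset Strict Implicit. Unset Printing Implicit Defensive.
Import Order.TTheory GRing.Theory Num.Theory.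

Section Flow.
Variables (Nd E : finType) (ends : E -> Nd * Nd).
Variables (S T : {set Nd}) (c : E -> nat) (ord : Nd -> seq E) (eo : Nd -> E).
Hypothesis tmpl : is_template ends S T c ord eo.

Local Open Scope ring_scope.

Definition bz (b : bool) : int := if b then 1 else 0.
Definition wt (e : E) (x : Nd) : int := bz ((ends e).1 == x) - bz ((ends e).2 == x).
Definition net (fl : E -> int) (x : Nd) : int := \sum_e fl e * wt e x.

Lemma net_upd (f : E -> int) e0 d z :
  net (fun e => if e == e0 then f e + d else f e) z = net f z + d * wt e0 z.
Proof.
rewrite /net (bigD1 e0) //= eqxx [in RHS](bigD1 e0) //=.
rewrite (eq_bigr (fun e => f e * wt e z)); last by move=> e /negbTE ->.
ring.
Qed.

Definition res (fl : E -> int) : rel Nd := fun x y =>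
  [exists e, ((((ends e).1 == x) && ((ends e).2 == y)) && (fl e <= 0))
          || ((((ends e).2 == x) && ((ends e).1 == y)) && (0 <= fl e))].

Lemma aug_path (fl : E -> int) : (forall e, -1 <= fl e <= 1) ->
  forall p x, uniq (x :: p) -> path (res fl) x p ->
  exists fl' : E -> int, [/\ (forall e, -1 <= fl' e <= 1),
     (forall z, net fl' z = net fl z + bz (z == x) - bz (z == last x p)) &
     (forall e, ((ends e).1 \notin x :: p) || ((ends e).2 \notin x :: p) -> fl' e = fl e)].
Proof.
move=> bnd; elim=> [|y p IH] x.
  move=> _ _; exists fl; split=> //= z; ring.
rewrite [uniq _]/= => /andP[xn u] /= /andP[/existsP[e0 He0] pa].
have [fl1 [b1 n1 p1]] := IH y u pa.
have xnot : x \notin y :: p by [].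
have [d [Hd He0b Hw]] : exists d : int, [/\ -1 <= fl1 e0 + d <= 1,
   fl1 e0 = fl e0 & forall z, d * wt e0 z = bz (z == x) - bz (z == y)].
  case/orP: He0 => /andP[/andP[/eqP h1 /eqP h2] hf].
    have fe : fl1 e0 = fl e0 by apply: p1; rewrite h1 xnot.
    exists 1; split=> //; first by have := bnd e0; rewrite fe; lia.
    move=> z; rewrite /wt h1 h2 ![_ == z]eq_sym; ring.
  have fe : fl1 e0 = fl e0 by apply: p1; rewrite h1 xnot orbT.
  exists (-1); split=> //; first by have := bnd e0; rewrite fe; lia.
  move=> z; rewrite /wt h1 h2 ![_ == z]eq_sym; ring.
exists (fun e => if e == e0 then fl1 e + d else fl1 e); split.
- by move=> e; case: eqP => [->|_] //.
- move=> z; rewrite net_upd n1 Hw /=; ring.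
- move=> e He; case: eqP => [Ee|_]; last first.
    apply: p1; move: He; rewrite !inE; case/orP=> /norP[_ ->] //; by rewrite orbT.
  exfalso; move: He; rewrite Ee.
  case/orP: He0 => /andP[/andP[/eqP -> /eqP ->] _]; rewrite !inE !eqxx ?orbT //.
Qed.


Definition valid (fl : E -> int) := [/\ forall e, -1 <= fl e <= 1,
  forall v, v \in verts S T -> net fl v = 0,
  forall s, s \in S -> 0 <= net fl s & forall t, t \in T -> net fl t <= 0].
Definition value (fl : E -> int) := \sum_(s in S) net fl s.

Lemma in_verts v : (v \in verts S T) = (v \notin S) && (v \notin T).
Proof. by rewrite /verts inE in_setU negb_or. Qed.

Lemma sum_bz_eq (a : Nd) (A : {set Nd}) : \sum_(x in A) bz (x == a) = bz (a \in A).
Proof.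
case: (boolP (a \in A)) => Ha.
  rewrite (big_setD1 a Ha) /= eqxx big1 ?addr0 // => x /setD1P[/negbTE -> _] //.
by rewrite big1 // => x xA; case: eqP xA => // ->; rewrite (negbTE Ha).
Qed.

Lemma sum_bz_card (X : {set E}) : \sum_e bz (e \in X) = #|X|%:Z.
Proof.
rewrite (eq_bigr (fun e => if e \in X then 1 else 0)) //.
by rewrite -big_mkcond /= sumr_const natz.
Qed.

Lemma cut_value fl : valid fl ->
  let R := [set x | [exists s in S, connect (res fl) s x]] in
  (forall t, t \in T -> t \notin R) -> value fl = #|crossing ends R|%:Z.
Proof.
move=> [bnd nv ns nt] R RT.
have SR : S \subset R.
  by apply/subsetP=> s sS; rewrite inE; apply/existsP; exists s; rewrite sS connect0.
have clos : forall x y, res fl x y -> x \in R -> y \in R.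
  move=> x y rxy; rewrite !inE => /existsP[s /andP[sS cs]]; apply/existsP; exists s.
  by rewrite sS (connect_trans cs (connect1 rxy)).
clearbody R.
have -> : value fl = \sum_(x in R) net fl x.
  rewrite /value [RHS](big_setID S) /= (setIidPr SR) [X in _ + X]big1 ?addr0 // => x /setDP[xR xS].
  by apply: nv; rewrite in_verts xS /=; apply/negP=> /RT; rewrite xR.
rewrite /net exchange_big /=.
rewrite -sum_bz_card; apply: eq_bigr => e _.
rewrite -mulr_sumr /wt sumrB !(eq_bigr (fun x => bz (x == _)) (fun x _ => congr1 bz (eq_sym _ _))).
rewrite !sum_bz_eq /crossing inE.
have := bnd e.
case: (boolP ((ends e).1 \in R)) => h1; case: (boolP ((ends e).2 \in R)) => h2 /= hb.
- ring.
- have : ~~ (fl e <= 0).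
    apply/negP=> le; move/negP: h2; apply; apply: (clos _ _ _ h1).
    by apply/existsP; exists e; rewrite !eqxx le.
  lia.
- have : ~~ (0 <= fl e).
    apply/negP=> le; move/negP: h1; apply; apply: (clos _ _ _ h2).
    by apply/existsP; exists e; rewrite !eqxx le orbT.
  lia.
- ring.
Qed.


Lemma flow_exists k : (forall C, is_edge_cut ends S T C -> (k <= #|C|)%N) ->
  forall m, (m <= k)%N -> exists fl, valid fl /\ value fl = m%:Z.
Proof.
case: tmpl => dST _ _ _ mincut.
elim=> [|m IH] lemk.
  exists (fun _ => 0); rewrite /valid /value /net.
  have n0 : forall x, \sum_e (0 : int) * wt e x = 0 by move=> x; rewrite big1 // => e _; rewrite mul0r.
  by split; [split=> [e|v _|s _|t _]; rewrite ?n0 | rewrite big1].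
have [fl [vf vm]] := IH (ltnW lemk).
set R := [set x | [exists s in S, connect (res fl) s x]].
case: (boolP [exists t in T, t \in R]) => [/existsP[t /andP[tT]] | noT].
  rewrite inE => /existsP[s /andP[sS /connectP[p pp tl]]].
  move: tl; case: (shortenP pp) => p' pp' up' _ tl.
  have [bnd nv ns nt] := vf.
  have [fl' [b' n' _]] := aug_path bnd up' pp'.
  rewrite -tl in n'.
  have tnS : t \notin S by rewrite (disjointFl dST tT).
  have snT : s \notin T by rewrite (disjointFr dST sS).
  exists fl'; split; first split.
  - exact: b'.
  - move=> v vV; rewrite n' nv //; move: vV; rewrite in_verts => /andP[vS vT].
    have -> : (v == s) = false by apply/eqP=> vs; rewrite vs sS in vS.
    have -> : (v == t) = false by apply/eqP=> vs; rewrite vs tT in vT.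
    by rewrite /bz; ring.
  - move=> x xS; rewrite n'.
    have -> : (x == t) = false by apply/eqP=> vs; rewrite -vs xS in tnS.
    have := ns x xS; rewrite /bz; case: (x == s); lia.
  - move=> x xT; rewrite n'.
    have -> : (x == s) = false by apply/eqP=> vs; rewrite -vs xT in snT.
    have := nt x xT; rewrite /bz; case: (x == t); lia.
  - rewrite /value (eq_bigr (fun x => net fl x + bz (x == s) - bz (x == t))) //.
    rewrite sumrB big_split /= sum_bz_eq sum_bz_eq -/(value fl) vm sS (negbTE tnS) /bz.
    by rewrite -addn1 PoszD; ring.
have := cut_value vf.
rewrite -/R => /(_ _) H.
have RT : forall t, t \in T -> t \notin R.
  by move=> t tT; apply/negP=> tR; move/negP: noT; apply; apply/existsP; exists t; rewrite tT.
have := H RT; rewrite vm => /eqP; rewrite eqz_nat => /eqP eqm.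
have : (k <= #|crossing ends R|)%N.
  apply: mincut; exists R; split => //.
    by apply/subsetP=> s sS; rewrite inE; apply/existsP; exists s; rewrite sS connect0.
  by apply/subsetP=> t tT; rewrite inE RT.
by rewrite -eqm; lia.
Qed.

End Flow.

Section Paths.
Variables (Nd E : finType) (ends : E -> Nd * Nd).
Variables (S T : {set Nd}) (c : E -> nat) (ord : Nd -> seq E) (eo : Nd -> E).
Hypothesis tmpl : is_template ends S T c ord eo.
Variables (fl : E -> int) (e0 : E).
Hypothesis vf : valid ends S T fl.
Local Open Scope ring_scope.

Lemma edge_at u e : u \in S :|: T -> (0 < nends ends e u)%N -> e = eo u.
Proof.
case: tmpl => _ _ deg _ uST pe.
have [dg pu] := deg u uST.
case: (eqVneq e (eo u)) => // ne.
move: dg; rewrite /degree (bigD1 (eo u)) //= (bigD1 e) ?ne //=; lia.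
Qed.

Lemma nends_eo u : u \in S :|: T -> nends ends (eo u) u = 1%N.
Proof.
case: tmpl => _ _ deg _ uST; have [dg pu] := deg u uST.
move: dg; rewrite /degree (bigD1 (eo u)) //=; lia.
Qed.

Lemma in_ord v e : v \in verts S T -> (0 < nends ends e v)%N -> e \in ord v.
Proof.
case: tmpl => _ _ _ oc vV pe; apply/negPn/negP => /count_memPn h.
by move: pe; rewrite -oc // h.
Qed.

Lemma net_ST u : u \in S :|: T -> net ends fl u = fl (eo u) * wt ends (eo u) u.
Proof.
move=> uST; rewrite /net (bigD1 (eo u)) //= big1 ?addr0 // => e ne.
have : ~~ (0 < nends ends e u)%N by apply: contra ne => /(edge_at uST) ->.
rewrite /wt /nends; case: ((ends e).1 == u); case: ((ends e).2 == u) => //= _.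
by rewrite /bz subrr mulr0.
Qed.

Definition hd e := if fl e == 1 then (ends e).2 else (ends e).1.
Definition tl e := if fl e == 1 then (ends e).1 else (ends e).2.
Definition In v := [set e | (fl e != 0) && (hd e == v)].
Definition Out v := [set e | (fl e != 0) && (tl e == v)].

Lemma fl_cases e : fl e = -1 \/ fl e = 0 \/ fl e = 1.
Proof. case: vf => b _ _ _; have := b e; lia. Qed.

Lemma nends_hd e : (0 < nends ends e (hd e))%N.
Proof. by rewrite /nends /hd; case: ifP => _; rewrite eqxx ?addn1. Qed.

Lemma nends_tl e : (0 < nends ends e (tl e))%N.
Proof. by rewrite /nends /tl; case: ifP => _; rewrite eqxx ?addn1. Qed.

Lemma wt_io e v : fl e * wt ends e v = bz (e \in Out v) - bz (e \in In v).
Proof.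
rewrite !inE /hd /tl /wt.
case: (fl_cases e) => [->|[->|->]] /=;
  case: ((ends e).1 == v); case: ((ends e).2 == v) => /=; rewrite /bz; ring.
Qed.

Lemma card_io v : v \in verts S T -> #|Out v| = #|In v|.
Proof.
case: vf => _ nv _ _ vV; have := nv v vV.
rewrite /net (eq_bigr _ (fun e _ => wt_io e v)) sumrB !sum_bz_card => /eqP.
by rewrite subr_eq0 eqz_nat => /eqP.
Qed.

Definition pi v e := nth e0 (enum (Out v)) (index e (enum (In v))).
Definition succ e : option E :=
  if (fl e != 0) && (hd e \in verts S T) then Some (pi (hd e) e) else None.
Definition srel : rel E := fun e e' => succ e == Some e'.

Lemma idx_lt v e : v \in verts S T -> e \in In v ->
  (index e (enum (In v)) < size (enum (Out v)))%N.
Proof. by move=> vV eI; rewrite -cardE card_io // cardE index_mem mem_enum. Qed.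

Lemma pi_out v e : v \in verts S T -> e \in In v -> pi v e \in Out v.
Proof. by move=> vV eI; rewrite -mem_enum /pi mem_nth // idx_lt. Qed.

Lemma succ_some e e' : succ e = Some e' ->
  [/\ fl e != 0, hd e \in verts S T, e \in In (hd e) & e' \in Out (hd e)].
Proof.
rewrite /succ; case: ifP => // /andP[f h] [<-].
have eI : e \in In (hd e) by rewrite inE f eqxx.
by split=> //; apply: pi_out.
Qed.

Lemma succ_inj e1 e2 e' : succ e1 = Some e' -> succ e2 = Some e' -> e1 = e2.
Proof.
move=> s1 s2.
have [f1 v1 i1 o1] := succ_some s1; have [f2 v2 i2 o2] := succ_some s2.
have hh : hd e1 = hd e2.
  by move: o1 o2; rewrite !inE => /andP[_ /eqP <-] /andP[_ /eqP <-].
move: s1 s2; rewrite /succ f1 v1 f2 v2 /= => -[E1] [E2].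
rewrite hh in E1 i1; move: E1; rewrite -E2 /pi => /eqP.
rewrite nth_uniq ?enum_uniq ?idx_lt // => /eqP ei.
have m1 : e1 \in enum (In (hd e2)) by rewrite mem_enum.
by rewrite -(nth_index e0 m1) ei nth_index // mem_enum.
Qed.

Lemma pred_of x z : connect srel x z -> x != z -> exists2 w, connect srel x w & srel w z.
Proof.
move=> /connectP[p pp ->]; elim/last_ind: p pp => [|q y _] /=; first by rewrite eqxx.
rewrite rcons_path last_rcons => /andP[pq sy] _; exists (last x q) => //.
by apply/connectP; exists q.
Qed.

Lemma back x y z : connect srel x z -> connect srel y z ->
  connect srel x y || connect srel y x.
Proof.
move=> /connectP[p pp ->]; elim/last_ind: p pp => [|q w IH] /=.
  by move=> _ ->; rewrite orbT.
rewrite rcons_path last_rcons => /andP[pq sw] cy.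
case: (eqVneq y w) => [->|nyw].
  by apply/orP; left; apply/connectP; exists (rcons q w); rewrite ?rcons_path ?pq ?last_rcons.
have [w' cw' sw'] := pred_of cy nyw.
have ew : w' = last x q by apply: (@succ_inj _ _ w); apply/eqP.
by apply: IH; rewrite -?ew.
Qed.

Lemma noimg_eq x y : (forall w, ~~ srel w y) -> connect srel x y -> x = y.
Proof.
move=> ni cxy; case: (eqVneq x y) => // nxy; have [w _ swy] := pred_of cxy nxy.
by rewrite (negbTE (ni w)) in swy.
Qed.

Lemma term_exists x : (forall w, ~~ srel w x) ->
  exists z, connect srel x z /\ succ z = None.
Proof.
move=> ni; case: (boolP [exists z, connect srel x z && (succ z == None)]).
  by move=> /existsP[z /andP[cz /eqP sz]]; exists z.
move=> /existsPn H; exfalso.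
set A := [set z | connect srel x z].
pose g z := odflt z (succ z).
have gA : {in A, forall z, srel z (g z)}.
  move=> z; rewrite inE => cz; have := H z; rewrite cz /= /g /srel.
  by case: (succ z).
have sub : g @: A \subset A.
  apply/subsetP => _ /imsetP[z zA ->]; rewrite inE.
  by rewrite inE in zA; rewrite (connect_trans zA (connect1 (gA z _))) // inE.
have inj : {in A &, injective g}.
  move=> z1 z2 z1A z2A eg; apply: (@succ_inj _ _ (g z1)); apply/eqP.
    exact: gA.
  by rewrite eg; apply: gA.
have eqA : g @: A = A by apply/eqP; rewrite eqEcard sub card_in_imset // leqnn.
have : x \in g @: A by rewrite eqA inE connect0.
case/imsetP => z zA ex; have := gA z zA; rewrite -ex.
by rewrite (negbTE (ni z)).
Qed.

Lemma flowed_reach x z : connect srel x z -> fl x != 0 -> fl z != 0.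
Proof.
move=> cxz fx.
have cl : closed srel [pred e | fl e != 0].
  move=> e e' /eqP s; have [f _ _ o] := succ_some s; move: o; rewrite !inE f.
  by case/andP=> ->.
by rewrite -[_ != _](closed_connect cl cxz).
Qed.


Definition Src := [set s in S | net ends fl s == 1].

Lemma src_eo s : s \in Src -> fl (eo s) != 0 /\ tl (eo s) = s.
Proof.
rewrite inE => /andP[sS /eqP n1].
have sST : s \in S :|: T by rewrite in_setU sS.
rewrite net_ST // in n1; have nn := nends_eo sST.
move: n1 nn; rewrite /wt /nends /tl.
case h1: ((ends (eo s)).1 == s); case h2: ((ends (eo s)).2 == s);
  case: (fl_cases (eo s)) => [->|[->|->]] //=; rewrite /bz => n1 nn; try lia.
all: by split=> //; apply/eqP.
Qed.

Lemma src_noimg s : s \in Src -> forall w, ~~ srel w (eo s).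
Proof.
move=> sSrc w; apply/negP => /eqP sw.
have [_ hv _ o] := succ_some sw; move: o; rewrite inE => /andP[_ /eqP tt].
have [_ te] := src_eo sSrc; rewrite te in tt.
move: sSrc; rewrite inE => /andP[sS _].
by move: hv; rewrite -tt in_verts sS.
Qed.

Lemma term_T z : fl z != 0 -> succ z = None -> hd z \in T /\ z = eo (hd z).
Proof.
move=> fz sz.
have nv : hd z \notin verts S T by apply/negP => hv; move: sz; rewrite /succ fz hv.
have hST : hd z \in S :|: T by move: nv; rewrite in_verts negb_and !negbK in_setU.
have ze : z = eo (hd z) := edge_at hST (nends_hd z).
split=> //; case/setUP: hST => // hS; exfalso.
case: vf => _ _ ns _; have := ns _ hS; rewrite net_ST ?in_setU ?hS // -ze.
have := @nends_eo (hd z); rewrite in_setU hS -ze => /(_ isT).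
rewrite /wt /nends /hd; move: fz.
case: (fl_cases z) => [->|[->|->]] //= _; rewrite eqxx /bz;
  case: (_ == _) => //=; lia.
Qed.

Lemma W_const (W : E -> nat) : (forall e e', srel e e' -> W e = W e') ->
  forall x z, connect srel x z -> W z = W x.
Proof.
move=> H x z cxz.
have cl : closed srel [pred e | W e == W x].
  by move=> e e' /H; rewrite !inE => ->.
by have := closed_connect cl cxz; rewrite !inE eqxx => /esym/eqP.
Qed.

Lemma src_unique s1 s2 z : s1 \in Src -> s2 \in Src ->
  connect srel (eo s1) z -> connect srel (eo s2) z -> s1 = s2.
Proof.
move=> h1 h2 c1 c2.
have ee : eo s1 = eo s2.
  case/orP: (back c1 c2) => cc.
    exact: noimg_eq (src_noimg h2) cc.
  by apply/esym; exact: noimg_eq (src_noimg h1) cc.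
by have [_ t1] := src_eo h1; have [_ t2] := src_eo h2; rewrite -t1 -t2 ee.
Qed.

Lemma term_src s : s \in Src -> exists z, [/\ connect srel (eo s) z,
  hd z \in T & z = eo (hd z)].
Proof.
move=> sS; have [z [cz sz]] := term_exists (src_noimg sS).
have [fs _] := src_eo sS.
have [hT ze] := term_T (flowed_reach cz fs) sz.
by exists z.
Qed.

Lemma card_Src k : value ends S fl = k%:Z -> #|Src| = k.
Proof.
case: vf => _ _ ns _ vk.
have n01 : forall s, s \in S -> net ends fl s = bz (s \in Src).
  move=> s sS; rewrite inE sS /=; have := ns s sS.
  rewrite net_ST ?in_setU ?sS // /wt /bz.
  case: (_ == _); case: (_ == _); case: (fl_cases (eo s)) => [->|[->|->]]; rewrite /= ?eqxx //= => H; lia.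
move: vk; rewrite /value (eq_bigr _ n01).
rewrite big_mkcond /= (eq_bigr (fun s => bz (s \in Src))).
  by rewrite sum_bz_card => /eqP; rewrite eqz_nat => /eqP.
move=> s _; case: ifP => // sS; rewrite inE sS //.
Qed.

End Paths.

Section Tensor.
Variables (Nd E : finType) (ends : E -> Nd * Nd).
Variables (S T : {set Nd}) (c : E -> nat) (ord : Nd -> seq E) (eo : Nd -> E).
Hypothesis tmpl : is_template ends S T c ord eo.
Variables (fl : E -> int) (e0 : E) (C : numClosedFieldType) (d : nat).
Hypothesis vf : valid ends S T fl.
Hypothesis dle : forall e, (d <= c e)%N.

Local Notation srel := (srel ends S T fl e0).
Local Notation succ := (succ ends S T fl e0).
Local Notation hd := (hd ends fl).
Local Notation Src := (Src ends S fl).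

Lemma cpos e : (0 < c e)%N. Proof. by case: tmpl. Qed.

Definition ordc e (m : nat) : 'I_(c e) := Ordinal (ltn_pmod m (cpos e)).

Lemma val_ordc e m : (m < d)%N -> val (ordc e m) = m.
Proof. by move=> md; rewrite /= modn_small // (leq_trans md (dle e)). Qed.

Definition Pv v (W : eidx c) : bool :=
  [forall e, forall e', ((hd e == v) && srel e e') ==> (val (W e) == val (W e'))].

Definition Tv : assignment c ord C := fun v =>
  [ffun y => if [exists W : eidx c, (restr ord W v == y) && Pv v W] then 1%R else 0%R].

Lemma restr_eq (W W' : eidx c) v x : restr ord W' v = restr ord W v -> x \in ord v ->
  val (W' x) = val (W x).
Proof.
move=> eqr xo.
have hi : (index x (ord v) < size (ord v))%N by rewrite index_mem.
move: eqr; rewrite /restr => /ffunP/(_ (Ordinal hi)); rewrite !ffunE => /(congr1 val).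
have tx : tnth (in_tuple (ord v)) (Ordinal hi) = x by rewrite (tnth_nth x) /= nth_index.
by rewrite tx.
Qed.

Lemma Pv_local (W W' : eidx c) v : v \in verts S T -> restr ord W' v = restr ord W v ->
  Pv v W' = Pv v W.
Proof.
move=> vV eqr; apply: eq_forallb => e; apply: eq_forallb => e'.
case: (boolP ((hd e == v) && srel e e')) => //= /andP[/eqP he se].
have [_ _ eI e'O] := succ_some vf (eqP se).
have eo1 : e \in ord v by apply: (in_ord tmpl vV); rewrite -he nends_hd.
have eo2 : e' \in ord v.
  apply: (in_ord tmpl vV); move: e'O; rewrite inE he => /andP[_ /eqP <-].
  exact: nends_tl.
by rewrite (restr_eq eqr eo1) (restr_eq eqr eo2).
Qed.

Lemma Tv_restr (W : eidx c) v : v \in verts S T ->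
  Tv v (restr ord W v) = if Pv v W then 1%R else 0%R.
Proof.
move=> vV; rewrite /Tv ffunE; case: (boolP (Pv v W)) => pv.
  by rewrite (_ : [exists _, _] = true) //; apply/existsP; exists W; rewrite eqxx pv.
case: existsP => // -[W' /andP[/eqP eqr pw']].
by rewrite (Pv_local vV eqr) (negbTE pv) in pw'.
Qed.

Definition Pall (W : eidx c) := [forall v in verts S T, Pv v W].

Lemma Pall_const W : Pall W -> forall e e', srel e e' -> val (W e) = val (W e').
Proof.
move=> /forall_inP H e e' se; have [_ hv _ _] := succ_some vf (eqP se).
by have /forallP/(_ e)/forallP/(_ e') := H _ hv; rewrite eqxx se /= => /eqP.
Qed.

Lemma const_Pall (W : eidx c) : (forall e e', srel e e' -> val (W e) = val (W e')) -> Pall W.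
Proof.
move=> H; apply/forall_inP => v _; apply/forallP => e; apply/forallP => e'.
by apply/implyP => /andP[_ /H ->].
Qed.

Lemma prod_Tv (W : eidx c) :
  (\prod_(v in verts S T) Tv v (restr ord W v) = if Pall W then 1 else 0)%R.
Proof.
rewrite (eq_bigr (fun v => if Pv v W then 1 else 0)%R); last by move=> v vV; rewrite Tv_restr.
case: (boolP (Pall W)) => [/forall_inP H|/forall_inPn [v vV pv]].
  by rewrite big1 // => v vV; rewrite H.
by rewrite (bigD1 v) //= (negbTE pv) mul0r.
Qed.

Lemma entry_neq0 i j : (beta eo S T Tv i j != 0)%R =
  [exists W : eidx c, [&& agree W (enum_val i : oidx c eo T),
                          agree W (enum_val j : oidx c eo S) & Pall W]].
Proof.
rewrite /beta mxE (eq_bigr _ (fun W _ => prod_Tv W)) -big_mkcondr /= sumr_const pnatr_eq0.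
rewrite -lt0n; apply/card_gt0P/existsP => -[W HW]; exists W; move: HW;
  by rewrite unfold_in /= andbA.
Qed.

Local Notation SrcT := {x : Nd | x \in Src}.

Definition Wa (a : {ffun SrcT -> 'I_d}) : eidx c :=
  [ffun e => if [pick u : SrcT | connect srel (eo (val u)) e] is Some u
             then ordc e (a u) else ordc e 0].

Lemma Wa_src a (u : SrcT) e : connect srel (eo (val u)) e -> val (Wa a e) = a u.
Proof.
move=> cu; rewrite ffunE; case: pickP => [u' cu'|/(_ u)]; last by rewrite cu.
have -> : u' = u by apply: val_inj; apply: (src_unique tmpl vf (valP u') (valP u) cu' cu).
by rewrite val_ordc.
Qed.

Lemma Wa_none a e : (forall u : SrcT, ~~ connect srel (eo (val u)) e) -> val (Wa a e) = 0%N.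
Proof.
move=> H; rewrite ffunE; case: pickP => [u cu|_]; first by move: (H u); rewrite cu.
by rewrite /= mod0n.
Qed.

Lemma Wa_const a e e' : srel e e' -> val (Wa a e) = val (Wa a e').
Proof.
move=> se.
case: (boolP [exists u : SrcT, connect srel (eo (val u)) e]) => [/existsP[u cu]|/existsPn nu].
  by rewrite (Wa_src a cu) (Wa_src a (connect_trans cu (connect1 se))).
rewrite (Wa_none a nu) Wa_none // => u; apply/negP => cu'.
have ne : eo (val u) != e'.
  apply/negP => /eqP ee; have := src_noimg tmpl e0 vf (valP u) e; by rewrite ee se.
have [w cw sw] := pred_of cu' ne.
have ew : w = e := succ_inj vf (eqP sw) (eqP se).
by move: (nu u); rewrite -ew cw.
Qed.

Definition psi (a : {ffun SrcT -> 'I_d}) : oidx c eo T := [ffun u => Wa a (eo (val u))].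
Definition phi (a : {ffun SrcT -> 'I_d}) : oidx c eo S := [ffun u => Wa a (eo (val u))].

Lemma diag_ok a : [exists W : eidx c, [&& agree W (psi a), agree W (phi a) & Pall W]].
Proof.
apply/existsP; exists (Wa a); rewrite /agree; apply/and3P; split.
- by apply/forallP => u; apply/eqP; rewrite /psi [RHS]ffunE.
- by apply/forallP => u; apply/eqP; rewrite /phi [RHS]ffunE.
- by apply: const_Pall => e e'; apply: Wa_const.
Qed.

Lemma offdiag a b : a != b ->
  ~~ [exists W : eidx c, [&& agree W (psi a), agree W (phi b) & Pall W]].
Proof.
move=> ab; apply/existsPn => W; apply/negP => /and3P[ga gb pw].
case: (boolP [forall u, a u == b u]) => [/forallP H|/forallPn [u nu]].
  by move/eqP: ab; apply; apply/ffunP => u; apply/eqP.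
have sS : val u \in Src := valP u.
have [z [cz hT ze]] := term_src tmpl e0 vf sS.
have wc := W_const (Pall_const pw) cz.
have sInS : val u \in S by move: sS; rewrite inE => /andP[].
move/forallP: gb => /(_ (exist _ (val u) sInS)) /eqP.
rewrite /phi ffunE /= => /(congr1 val); rewrite (Wa_src b (connect0 _ _)) => wb.
move/forallP: ga => /(_ (exist _ (hd z) hT)) /eqP.
rewrite /psi ffunE /= => /(congr1 val); rewrite -ze (Wa_src a cz) => wa.
move/negP: nu; apply; apply/eqP; apply: ord_inj.
by rewrite -wa -wb wc.
Qed.

Lemma rank_lb : (d ^ #|Src| <= \rank (beta eo S T Tv))%N.
Proof.
pose N := #|{: {ffun SrcT -> 'I_d}}|.
pose f (i : 'I_N) := enum_rank (psi (enum_val i)).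
pose g (i : 'I_N) := enum_rank (phi (enum_val i)).
pose B := beta eo S T Tv.
pose M := mxsub f g B.
have rM : (\rank M <= \rank B)%N.
  rewrite /M mxsubrc rowsubE.
  have -> : colsub g B = (B *m colsub g 1%:M)%R by rewrite mulmx_colsub mulmx1.
  by apply: leq_trans (mxrankM_maxr _ _) _; apply: mxrankM_maxl.
have uM : M \in unitmx.
  have -> : M = diag_mx (\row_i M i i).
    apply/matrixP => i j; rewrite [in RHS]mxE [in RHS]mxE.
    case: eqVneq => [->|ne]; first by rewrite mulr1n.
    rewrite /= mulr0n; apply/eqP; rewrite -[_ == 0%R]negbK /M mxE /B entry_neq0 !enum_rankK.
    by apply: offdiag; apply: contra ne => /eqP/enum_val_inj ->.
  rewrite unitmxE det_diag unitfE; apply/prodf_neq0 => i _.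
  by rewrite mxE /M mxE /B entry_neq0 !enum_rankK; apply: diag_ok.
have eqM := mxrank_unit uM.
have cN : N = d ^ #|Src| by rewrite /N card_ffun card_ord card_sig.
by apply: (leq_trans _ rM); rewrite eqM cN.
Qed.

End Tensor.

Theorem proposition3p11 (Nd E : finType) (ends : E -> Nd * Nd)
  (S T : {set Nd}) (c : E -> nat) (ord : Nd -> seq E) (eo : Nd -> E)
  (C : numClosedFieldType) (dmin k : nat) :
  is_template ends S T c ord eo ->
  is_min_capacity c dmin ->
  is_min_cut_size ends S T k ->
  (dmin ^ k <= QMF c ord eo C S T)%N.
Proof.
move=> tmpl [[e0 ce0] dle] [_ mincut].
have [fl [vf vk]] := flow_exists tmpl mincut (leqnn k).
have cS := card_Src tmpl vf vk.
have := rank_lb tmpl e0 C vf dle; rewrite cS => rk.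
apply: (leq_trans rk); rewrite /QMF.
have rle : (\rank (beta eo S T (Tv ends S T c ord fl e0 C)) < #|{: oidx c eo T}|.+1)%N.
  by rewrite ltnS rank_leq_row.
apply: (@leq_bigmax_cond _ _ (fun i : 'I__ => nat_of_ord i) (Ordinal rle)).
rewrite /decide; case: excluded_middle_informative => // -[].
by exists (Tv ends S T c ord fl e0 C).
Qed.
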